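(* Let $l\ge1$ and let $A$ be a real $l\times l$ matrix. If $\det(I+\overline IA)\ge0$ for every $l\times l$ diagonal matrix $\overline I$ whose diagonal entries are each $1$ or $-1$, then $|\det A|\le1$.
   Context: $I$ denotes the $l\times l$ identity matrix. *)

(* Defs.v *)
From mathcomp Require Import all_boot all_order all_algebra.
From mathcomp Require Import reals.
Set Implicit Arguments. Unset Strict Implicit. Unset Printing Implicit Defensive.
Import Order.TTheory GRing.Theory Num.Theory.
Local Open Scope ring_scope.

(* A sign vector: every entry is 1 or -1. diag_mx s is then a diagonal
   matrix with diagonal entries in {1,-1}. *)
Definition sign_vec (R : nzRingType) (l : nat) (s : 'rV[R]_l) : Prop :=
  forall j : 'I_l, s 0 j = 1 \/ s 0 j = -1.

(* Main.v *)
Require Import Defs.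
From mathcomp Require Import all_boot all_order all_algebra.
From mathcomp Require Import reals.
From mathcomp Require Import perm ring.
Import Order.TTheory GRing.Theory Num.Theory.
Local Open Scope ring_scope.


Lemma key (R : comPzRingType) n (c : 'I_n -> bool -> R) (f : 'I_n -> bool -> 'I_n -> R) :
 \sum_(d : {ffun 'I_n -> bool}) (\prod_i c i (d i)) * \det (\matrix_(i,j) f i (d i) j)
 = \det (\matrix_(i,j) \sum_b c i b * f i b j).
Proof.
rewrite /determinant.
under eq_bigr => d _ do rewrite big_distrr /=.
rewrite exchange_big /=; apply: eq_bigr => s _.
transitivity ((-1) ^+ perm.odd_perm s * \sum_(d : {ffun 'I_n -> bool})
   \prod_i (c i (d i) * f i (d i) (s i))).
  rewrite big_distrr; apply: eq_bigr => d _; rewrite mulrCA -big_split /=.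
  by congr (_ * _); apply: eq_bigr => i _; rewrite mxE.
congr (_ * _); rewrite -(bigA_distr_bigA (fun i b => c i b * f i b (s i))) /=; apply: eq_bigr => i _; by rewrite mxE.
Qed.

Theorem corollary2p1 (R : realType) (l : nat) (hl : (1 <= l)%N)
  (A : 'M[R]_l) :
  (forall s : 'rV[R]_l, sign_vec s -> 0 <= \det (1%:M + diag_mx s *m A)) ->
  `|\det A| <= 1.
Proof.
move=> H.
pose sg (b : bool) : R := if b then 1 else -1.
pose f (i : 'I_l) (b : bool) (j : 'I_l) : R := (i == j)%:R + sg b * A i j.
pose g (d : {ffun 'I_l -> bool}) := \det (\matrix_(i, j) f i (d i) j).
have gE d : g d = \det (1%:M + diag_mx (\row_j sg (d j)) *m A).
  rewrite /g mul_diag_mx; congr (\det _); apply/matrixP => i j.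
  by rewrite !mxE /f eq_sym.

have g0 d : 0 <= g d.
  rewrite gE; apply: H => j; rewrite mxE /sg; case: (d j); by [left|right].
have S1 : \sum_(d : {ffun 'I_l -> bool}) (\prod_i (fun _ _ => 1 : R) i (d i)) * g d = 2 ^+ l.
  rewrite /g (@key _ _ (fun _ _ => 1) f).
  have -> : (\matrix_(i, j) \sum_b (fun _ _ => 1 : R) i b * f i b j)
     = (2 : R) *: 1%:M.
    apply/matrixP => i j; rewrite !mxE big_bool /f /sg /=.
    rewrite eq_sym; case: (i == j); rewrite /= ?mulr1 ?mulr0; ring.
  by rewrite detZ det1 mulr1.
have S2 : \sum_(d : {ffun 'I_l -> bool}) (\prod_i (fun i b => sg b) i (d i)) * g d = 2 ^+ l * \det A.
  rewrite /g (@key _ _ (fun i b => sg b) f).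
  have -> : (\matrix_(i, j) \sum_b (fun i b => sg b) i b * f i b j)
     = (2 : R) *: A.
    apply/matrixP => i j; rewrite !mxE big_bool /f /sg /=; ring.
  by rewrite detZ.
have Hp : 0 < (2 : R) ^+ l by apply: exprn_gt0.
rewrite -(ler_pM2l Hp) mulr1.
rewrite -{1}(ger0_norm (ltW Hp)) -normrM -S2.
rewrite -[X in _ <= X]S1.
apply: le_trans (ler_norm_sum _ _ _) _.
apply: ler_sum => d _.
rewrite normrM normr_prod big1 ?mul1r ?big1 ?mul1r ?ger0_norm //.
  by move=> i _; rewrite /sg; case: (d i); rewrite ?normrN normr1.
Qed.
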